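(* Let $\mathcal{M}=(S,A,\delta)$ be a finite fuzzy transition system and let $\gamma=1$. Define $d_0=\bot$ (where $\bot(s,t)=0$ for all $s,t\in S$) and $d_{n+1}=\Delta(d_n)$. Then the number of iterations until $d_n=d_{n+1}$ holds for the first time is bounded by a polynomial in the size $|\mathcal{M}|$.
   Context: A fuzzy set on a finite set $X$ is a map $\mu:X\to[0,1]$; $\mathcal{F}(X)$ is the set of fuzzy sets on $X$; $\mu(U)=\max_{x\in U}\mu(x)$; $\mathsf{Supp}(\mu)=\{x\mid\mu(x)>0\}$. A fuzzy transition system is $\mathcal{M}=(S,A,\delta)$ with $S,A$ finite and $\delta:S\times A\to\mathcal{P}(\mathcal{F}(S))$, each $\delta(s,a)$ finite. Its size is $|\mathcal{M}|=|S|+\sum_{s\in S,a\in A,\mu\in\delta(s,a)}|\mathsf{Supp}(\mu)|$. $\mathcal{D}(S)$ is the set of pseudo-ultrametrics $d:S\times S\to[0,1]$, ordered pointwise. Lifting: $\hat d(\mu,\eta)=1$ if $\mu(S)\ne\eta(S)$, and otherwise $\hat d(\mu,\eta)$ is the minimum of $\max_{u,v}\min(d(u,v),x_{uv})$ over $x_{uv}\ge0$ with $\max_v x_{uv}=\mu(u)$ for all $u$ and $\max_u x_{uv}=\eta(v)$ for all $v$. For finite $Z\subseteq\mathcal{F}(S)$: $\hat d(\mu,Z)=\min_{\eta\in Z}\hat d(\mu,\eta)$ if $Z\ne\emptyset$, else $1$. Hausdorff distance: $H_{\hat d}(\emptyset,\emptyset)=0$, otherwise $H_{\hat d}(Y,Z)=\max(\max_{\mu\in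 Y}\hat d(\mu,Z),\max_{\eta\in Z}\hat d(\eta,Y))$. With discounting factor $\gamma\in(0,1]$, $\Delta(d)(s,t)=\gamma\cdot\max_{a\in A}H_{\hat d}(\delta(s,a),\delta(t,a))$. *)

(* Defs.v *)
From HB Require Import structures.
From mathcomp Require Import all_boot all_order all_algebra.
From mathcomp Require Import finmap.
From mathcomp Require Import boolp classical_sets reals.
Set Implicit Arguments. Unset Strict Implicit. Unset Printing Implicit Defensive.
Import Order.TTheory GRing.Theory Num.Theory.
Local Open Scope ring_scope.

Section FTS.
Variables (R : realType) (S A : finType).

Definition fuzzy := {ffun S -> R}.

Definition trans := S -> A -> {fset fuzzy}.

Definition fts_wf (delta : trans) : Prop :=
  forall s a (mu : fuzzy), mu \in delta s a -> forall x, 0 <= mu x <= 1.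

Definition fts_size (delta : trans) : nat :=
  (#|S| + \sum_(s : S) \sum_(a : A) \sum_(mu <- delta s a)
      #|[set x : S | (0 < mu x)%R]|)%N.

(* mu(U) for U = S : max_{x in S} mu(x)  (fuzzy values are >= 0) *)
Definition fmass (mu : fuzzy) : R := \big[Num.max/0]_(x : S) mu x.

Definition coupling (mu eta : fuzzy) (x : S -> S -> R) : Prop :=
  (forall u v, 0 <= x u v) /\
  (forall u, \big[Num.max/0]_(v : S) x u v = mu u) /\
  (forall v, \big[Num.max/0]_(u : S) x u v = eta v).

Definition coupling_cost (d : S -> S -> R) (x : S -> S -> R) : R :=
  \big[Num.max/0]_(u : S) \big[Num.max/0]_(v : S) Num.min (d u v) (x u v).

(* the lifting \hat d; the minimum over couplings is written as an infimum
   (it is attained). *)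
Definition lift (d : S -> S -> R) (mu eta : fuzzy) : R :=
  if fmass mu != fmass eta then 1
  else inf [set r | exists x, coupling mu eta x /\ r = coupling_cost d x].

Definition lift_set (d : S -> S -> R) (mu : fuzzy) (Z : {fset fuzzy}) : R :=
  if Z == fset0 then 1
  else inf [set r | exists2 eta, eta \in Z & r = lift d mu eta].

Definition hausdorff (d : S -> S -> R) (Y Z : {fset fuzzy}) : R :=
  if (Y == fset0) && (Z == fset0) then 0
  else Num.max (\big[Num.max/0]_(mu <- Y) lift_set d mu Z)
               (\big[Num.max/0]_(eta <- Z) lift_set d eta Y).

Definition Delta (gamma : R) (delta : trans) (d : S -> S -> R) : S -> S -> R :=
  fun s t => gamma * \big[Num.max/0]_(a : A) hausdorff d (delta s a) (delta t a).

Definition dseq (gamma : R) (delta : trans) (n : nat) : S -> S -> R :=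
  iter n (Delta gamma delta) (fun _ _ => 0).

End FTS.

(* Main.v *)
Require Import Defs.
From HB Require Import structures.
From mathcomp Require Import all_boot all_order all_algebra.
From mathcomp Require Import finmap.
From mathcomp Require Import boolp classical_sets reals.
From mathcomp Require Import zify.
Import Order.TTheory GRing.Theory Num.Theory.
Local Open Scope ring_scope.
Set Implicit Arguments. Unset Strict Implicit.

Fixpoint fl {R : realType} (V : seq R) (y : R) : R :=
  match V with
  | [::] => 0
  | v :: V' => if v <= y then Num.max v (fl V' y) else fl V' y
  end.

Lemma fl_ge0 (R : realType) (V : seq R) y : 0 <= fl V y.
Proof. elim: V => //= v V IH; by case: ifP => // _; rewrite le_max IH orbT. Qed.

Lemma fl_le (R : realType) (V : seq R) y : 0 <= y -> fl V y <= y.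
Proof. move=> y0; elim: V => //= v V IH; by case: ifP => // hv; rewrite ge_max hv IH. Qed.

Lemma fl_mono (R : realType) (V : seq R) y y' : y <= y' -> fl V y <= fl V y'.
Proof.
move=> yy; elim: V => //= v V IH; case: ifP => hv.
  have -> : v <= y' by apply: le_trans yy.
  by rewrite ge_max !le_max lexx IH !orbT.
by case: ifP => _; rewrite ?le_max IH ?orbT.
Qed.

Lemma fl_ub (R : realType) (V : seq R) v y : v \in V -> v <= y -> v <= fl V y.
Proof.
elim: V => //= w V IH; rewrite inE => /orP[/eqP->|hv] hy.
  by rewrite hy le_max lexx.
by case: ifP => _; rewrite ?le_max IH ?orbT.
Qed.

Lemma fl_id (R : realType) (V : seq R) v : v \in V -> 0 <= v -> fl V v = v.
Proof. by move=> hv v0; apply/le_anti; rewrite fl_le // fl_ub. Qed.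

Lemma fl_in (R : realType) (V : seq R) y : 0 \in V -> fl V y \in V.
Proof.
move=> h0; suff : fl V y = 0 \/ fl V y \in V by case=> // ->.
elim: V {h0} => /= [|v V IH]; first by left.
case: ifP => _.
  rewrite maxEle; case: ifP => _; last by right; rewrite inE eqxx.
  by case: IH => [->|h]; [left|right; rewrite inE h orbT].
by case: IH => [->|h]; [left|right; rewrite inE h orbT].
Qed.

Lemma fl_max (R : realType) (V : seq R) a b :
  fl V (Num.max a b) = Num.max (fl V a) (fl V b).
Proof.
case: (leP a b) => h.
  by rewrite max_r // fl_mono.
by rewrite max_l // fl_mono // ltW.
Qed.

Lemma fl_min (R : realType) (V : seq R) a b :
  fl V (Num.min a b) = Num.min (fl V a) (fl V b).
Proof.
case: (leP a b) => h.
  by rewrite min_l // fl_mono.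
by rewrite min_r // fl_mono // ltW.
Qed.

Lemma fl0 (R : realType) (V : seq R) : fl V 0 = 0.
Proof. by apply/le_anti; rewrite fl_ge0 fl_le. Qed.

Lemma fl_bigmax (R : realType) (V : seq R) (I : Type) (r : seq I) (P : pred I)
  (F : I -> R) :
  fl V (\big[Num.max/0]_(i <- r | P i) F i) =
  \big[Num.max/0]_(i <- r | P i) fl V (F i).
Proof. elim/big_rec2: _ => [|i y1 y2 _ <-]; [exact: fl0 | exact: fl_max]. Qed.

Lemma bigmax_ge0 (R : realType) (I : Type) (r : seq I) (P : pred I) (F : I -> R) :
  0 <= \big[Num.max/0]_(i <- r | P i) F i.
Proof. by elim/big_rec: _ => // i x _ h; rewrite le_max h orbT. Qed.

Lemma bigmax_mono (R : realType) (I : Type) (r : seq I) (P : pred I) (F G : I -> R) :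
  (forall i, P i -> F i <= G i) ->
  \big[Num.max/0]_(i <- r | P i) F i <= \big[Num.max/0]_(i <- r | P i) G i.
Proof.
move=> h; elim/big_ind2: _ => // x1 x2 y1 y2 h1 h2.
by rewrite ge_max !le_max h1 h2 orbT.
Qed.

Lemma bigmax_in (R : realType) (I : Type) (r : seq I) (P : pred I) (F : I -> R)
  (Q : pred R) :
  Q 0 -> (forall i, P i -> Q (F i)) -> Q (\big[Num.max/0]_(i <- r | P i) F i).
Proof.
move=> q0 h; elim/big_ind: _ => // x y hx hy.
by rewrite maxEle; case: ifP.
Qed.

Lemma inf_min (R : realType) (E : set R) m :
  E m -> (forall r, E r -> m <= r) -> inf E = m.
Proof.
move=> Em lb; apply/le_anti/andP; split.
  by apply: (ge_inf _ Em); exists m => r Er; exact: lb.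
by apply: lb_le_inf; [exists m | move=> r Er; exact: lb].
Qed.

Lemma seq_min (R : realType) (a : R) L :
  exists2 m, m \in a :: L & forall y, y \in a :: L -> m <= y.
Proof.
elim: L a => [|b L IH] a.
  by exists a; rewrite ?inE // => y; rewrite inE => /eqP->.
have [m hm hl] := IH b.
case: (leP a m) => h.
  exists a; first by rewrite inE eqxx.
  move=> y; rewrite inE => /orP[/eqP->//|/hl]; exact: le_trans.
exists m; first by rewrite inE hm orbT.
move=> y; rewrite inE => /orP[/eqP->|/hl//]; exact: ltW.
Qed.

Lemma seq_min' (R : realType) (L : seq R) x : x \in L ->
  exists2 m, m \in L & forall y, y \in L -> m <= y.
Proof. by case: L => // a L _; apply: seq_min. Qed.

Definition Cset (R : realType) (S : finType) (d : S -> S -> R) (mu eta : fuzzy R S) :=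
  [set r | exists x, coupling mu eta x /\ r = coupling_cost d x]%classic.

Lemma cost_ge0 (R : realType) (S : finType) (d : S -> S -> R) x :
  0 <= coupling_cost d x.
Proof. exact: bigmax_ge0. Qed.

Lemma cost_mono (R : realType) (S : finType) (d d' : S -> S -> R) x :
  (forall u v, d u v <= d' u v) -> coupling_cost d x <= coupling_cost d' x.
Proof.
move=> h; apply: bigmax_mono => u _; apply: bigmax_mono => v _.
by rewrite le_min !ge_min h lexx orbT.
Qed.

Lemma cost_round (R : realType) (S : finType) (V : seq R) (d : S -> S -> R) x :
  (forall r, r \in V -> 0 <= r) -> (forall u v, d u v \in V) ->
  coupling_cost d (fun u v => fl V (x u v)) = fl V (coupling_cost d x).
Proof.
move=> hV hd; rewrite /coupling_cost fl_bigmax; apply: eq_bigr => u _.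
rewrite fl_bigmax; apply: eq_bigr => v _.
by rewrite fl_min (fl_id (hd u v)) //; apply: hV.
Qed.

Lemma coupling_round (R : realType) (S : finType) (V : seq R) (mu eta : fuzzy R S) x :
  (forall r, r \in V -> 0 <= r) -> (forall u, mu u \in V) -> (forall v, eta v \in V) ->
  coupling mu eta x -> coupling mu eta (fun u v => fl V (x u v)).
Proof.
move=> hV hmu heta [h0 [h1 h2]]; split; first by move=> u v; exact: fl_ge0.
split=> u; rewrite -fl_bigmax ?h1 ?h2 fl_id //; apply: hV => //.
Qed.

Lemma Cset_min (R : realType) (S : finType) (V : seq R) (d : S -> S -> R) (mu eta : fuzzy R S) :
  0 \in V -> (forall r, r \in V -> 0 <= r) -> (forall u v, d u v \in V) ->
  (forall u, mu u \in V) -> (forall v, eta v \in V) ->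
  (exists x, coupling mu eta x) ->
  exists2 m, m \in V & (Cset d mu eta m /\ forall r, Cset d mu eta r -> m <= r).
Proof.
move=> h0 hV hd hmu heta [x0 hx0].
pose L := [seq r <- V | `[< Cset d mu eta r >]].
have inL : forall r, Cset d mu eta r -> fl V r \in L /\ fl V r <= r.
  move=> r [x [hx ->]]; split; last by apply: fl_le; exact: cost_ge0.
  rewrite mem_filter fl_in // andbT; apply/asboolP.
  exists (fun u v => fl V (x u v)); split; first exact: coupling_round.
  by rewrite cost_round.
have [m mL mmin] := seq_min' (proj1 (inL _ (ex_intro _ x0 (conj hx0 erefl)))).
move: mL; rewrite mem_filter => /andP[/asboolP Cm mV].
exists m => //; split => // r Cr.
have [rL rle] := inL r Cr.
exact: le_trans (mmin _ rL) rle.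
Qed.

Lemma Cset_empty (R : realType) (S : finType) (d : S -> S -> R) (mu eta : fuzzy R S) :
  ~ (exists x, coupling mu eta x) -> Cset d mu eta = set0.
Proof.
move=> hn; apply/seteqP; split => r //= [x [hx _]]; exfalso; apply: hn; by exists x.
Qed.

Lemma lift_inV (R : realType) (S : finType) (V : seq R) (d : S -> S -> R) (mu eta : fuzzy R S) :
  0 \in V -> 1 \in V -> (forall r, r \in V -> 0 <= r) -> (forall u v, d u v \in V) ->
  (forall u, mu u \in V) -> (forall v, eta v \in V) ->
  Defs.lift d mu eta \in V.
Proof.
move=> h0 h1 hV hd hmu heta; rewrite /Defs.lift; case: ifP => // _.
have -> : [set r | exists x, coupling mu eta x /\ r = coupling_cost d x]%classic = Cset d mu eta by [].
case: (pselect (exists x, coupling mu eta x)) => hx.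
  have [m mV [Cm mmin]] := Cset_min h0 hV hd hmu heta hx.
  by rewrite (inf_min Cm mmin).
by rewrite Cset_empty // inf0.
Qed.

Lemma lift_mono (R : realType) (S : finType) (V : seq R) (d d' : S -> S -> R) (mu eta : fuzzy R S) :
  0 \in V -> (forall r, r \in V -> 0 <= r) -> (forall u v, d u v \in V) ->
  (forall u v, d' u v \in V) -> (forall u v, d u v <= d' u v) ->
  (forall u, mu u \in V) -> (forall v, eta v \in V) ->
  Defs.lift d mu eta <= Defs.lift d' mu eta.
Proof.
move=> h0 hV hd hd' hdd hmu heta; rewrite /Defs.lift; case: ifP => // _.
have -> : [set r | exists x, coupling mu eta x /\ r = coupling_cost d x]%classic = Cset d mu eta by [].
have -> : [set r | exists x, coupling mu eta x /\ r = coupling_cost d' x]%classic = Cset d' mu eta by [].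
case: (pselect (exists x, coupling mu eta x)) => hx.
  have [m mV [Cm mmin]] := Cset_min h0 hV hd hmu heta hx.
  have [m' m'V [Cm' mmin']] := Cset_min h0 hV hd' hmu heta hx.
  rewrite (inf_min Cm mmin) (inf_min Cm' mmin').
  case: Cm' => x [cx ->].
  apply: le_trans (mmin _ _) (cost_mono _ hdd).
  by exists x.
by rewrite !Cset_empty // inf0.
Qed.

Lemma lift_set_min (R : realType) (S : finType) (d : S -> S -> R) (mu : fuzzy R S)
  (Z : {fset fuzzy R S}) : Z != fset0 ->
  exists2 eta, eta \in Z & (lift_set d mu Z = Defs.lift d mu eta /\
     forall e, e \in Z -> Defs.lift d mu eta <= Defs.lift d mu e).
Proof.
move=> hZ; case/fset0Pn: (hZ) => e0 he0.
have he0' : e0 \in (Z : seq _) by [].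
have [m mL mmin] := seq_min' (map_f (fun e => Defs.lift d mu e) he0').
case/mapP: mL => eta etaZ meq.
have lb : forall e, e \in Z -> Defs.lift d mu eta <= Defs.lift d mu e.
  move=> e he; rewrite -meq; apply: mmin; apply: map_f; exact: he.
exists eta => //; split => //.
rewrite /lift_set (negbTE hZ); apply: inf_min; first by exists eta.
by move=> r [e he ->]; exact: lb.
Qed.

Lemma lift_set_inV (R : realType) (S : finType) (V : seq R) (d : S -> S -> R) (mu : fuzzy R S)
  (Z : {fset fuzzy R S}) :
  0 \in V -> 1 \in V -> (forall r, r \in V -> 0 <= r) -> (forall u v, d u v \in V) ->
  (forall u, mu u \in V) -> (forall e, e \in Z -> forall v, e v \in V) ->
  lift_set d mu Z \in V.
Proof.
move=> h0 h1 hV hd hmu hZ.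
case: (eqVneq Z fset0) => [->|nZ]; first by rewrite /lift_set eqxx.
have [eta etaZ [-> _]] := lift_set_min d mu nZ.
apply: (@lift_inV R S V) => //; exact: hZ.
Qed.

Lemma lift_set_mono (R : realType) (S : finType) (V : seq R) (d d' : S -> S -> R) (mu : fuzzy R S)
  (Z : {fset fuzzy R S}) :
  0 \in V -> (forall r, r \in V -> 0 <= r) -> (forall u v, d u v \in V) ->
  (forall u v, d' u v \in V) -> (forall u v, d u v <= d' u v) ->
  (forall u, mu u \in V) -> (forall e, e \in Z -> forall v, e v \in V) ->
  lift_set d mu Z <= lift_set d' mu Z.
Proof.
move=> h0 hV hd hd' hdd hmu hZ.
case: (eqVneq Z fset0) => [->|nZ]; first by rewrite /lift_set eqxx.
have [eta etaZ [-> lb]] := lift_set_min d mu nZ.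
have [eta' etaZ' [-> _]] := lift_set_min d' mu nZ.
apply: le_trans (lb _ etaZ') _.
apply: (@lift_mono R S V) => //; exact: hZ.
Qed.

Lemma max_inV (R : realType) (V : seq R) a b : a \in V -> b \in V -> Num.max a b \in V.
Proof. by move=> ha hb; rewrite maxEle; case: ifP. Qed.

Lemma haus_inV (R : realType) (S : finType) (V : seq R) (d : S -> S -> R)
  (Y Z : {fset fuzzy R S}) :
  0 \in V -> 1 \in V -> (forall r, r \in V -> 0 <= r) -> (forall u v, d u v \in V) ->
  (forall e, e \in Y -> forall v, e v \in V) -> (forall e, e \in Z -> forall v, e v \in V) ->
  hausdorff d Y Z \in V.
Proof.
move=> h0 h1 hV hd hY hZ; rewrite /hausdorff; case: ifP => // _.
apply: max_inV.
  rewrite big_seq; apply: (@bigmax_in R _ _ _ _ [pred r | r \in V]) => // mu muY /=.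
  apply: (@lift_set_inV R S V) => //; exact: hY.
rewrite big_seq; apply: (@bigmax_in R _ _ _ _ [pred r | r \in V]) => // mu muZ /=.
apply: (@lift_set_inV R S V) => //; exact: hZ.
Qed.

Lemma haus_mono (R : realType) (S : finType) (V : seq R) (d d' : S -> S -> R)
  (Y Z : {fset fuzzy R S}) :
  0 \in V -> (forall r, r \in V -> 0 <= r) -> (forall u v, d u v \in V) ->
  (forall u v, d' u v \in V) -> (forall u v, d u v <= d' u v) ->
  (forall e, e \in Y -> forall v, e v \in V) -> (forall e, e \in Z -> forall v, e v \in V) ->
  hausdorff d Y Z <= hausdorff d' Y Z.
Proof.
move=> h0 hV hd hd' hdd hY hZ; rewrite /hausdorff; case: ifP => // _.
have H1 : \big[Num.max/0]_(mu <- Y) lift_set d mu Z <= \big[Num.max/0]_(mu <- Y) lift_set d' mu Z.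
  rewrite big_seq [X in _ <= X]big_seq; apply: bigmax_mono => mu muY.
  apply: (@lift_set_mono R S V) => //; exact: hY.
have H2 : \big[Num.max/0]_(mu <- Z) lift_set d mu Y <= \big[Num.max/0]_(mu <- Z) lift_set d' mu Y.
  rewrite big_seq [X in _ <= X]big_seq; apply: bigmax_mono => mu muZ.
  apply: (@lift_set_mono R S V) => //; exact: hZ.
by rewrite ge_max !le_max H1 H2 orbT.
Qed.

Lemma Delta_inV (R : realType) (S A : finType) (delta : trans R S A) (V : seq R) (d : S -> S -> R) :
  0 \in V -> 1 \in V -> (forall r, r \in V -> 0 <= r) -> (forall u v, d u v \in V) ->
  (forall s a (mu : fuzzy R S), mu \in delta s a -> forall u, mu u \in V) ->
  forall s t, Delta 1 delta d s t \in V.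
Proof.
move=> h0 h1 hV hd hD s t; rewrite /Delta mul1r.
apply: (@bigmax_in R _ _ _ _ [pred r | r \in V]) => // a _ /=.
apply: (@haus_inV R S V) => // e he; exact: hD he.
Qed.

Lemma Delta_mono (R : realType) (S A : finType) (delta : trans R S A) (V : seq R) (d d' : S -> S -> R) :
  0 \in V -> (forall r, r \in V -> 0 <= r) -> (forall u v, d u v \in V) ->
  (forall u v, d' u v \in V) -> (forall u v, d u v <= d' u v) ->
  (forall s a (mu : fuzzy R S), mu \in delta s a -> forall u, mu u \in V) ->
  forall s t, Delta 1 delta d s t <= Delta 1 delta d' s t.
Proof.
move=> h0 hV hd hd' hdd hD s t; rewrite /Delta !mul1r.
apply: bigmax_mono => a _.
apply: (@haus_mono R S V) => // e he; exact: hD he.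
Qed.

Definition Wl (R : realType) (S A : finType) (delta : trans R S A) : seq R :=
  \big[cat/[::]]_(s : S) \big[cat/[::]]_(a : A) \big[cat/[::]]_(mu <- delta s a)
     [seq mu x | x <- enum [set x : S | (0 < mu x)%R]].

Lemma size_Wl (R : realType) (S A : finType) (delta : trans R S A) :
  size (Wl delta) = (\sum_(s : S) \sum_(a : A) \sum_(mu <- delta s a)
      #|[set x : S | (0 < mu x)%R]|)%N.
Proof.
rewrite /Wl (big_morph (@size R) (@size_cat R) (erefl : size (@nil R) = 0%N)); apply: eq_bigr => s _.
rewrite (big_morph (@size R) (@size_cat R) (erefl : size (@nil R) = 0%N)); apply: eq_bigr => a _.
rewrite (big_morph (@size R) (@size_cat R) (erefl : size (@nil R) = 0%N)); apply: eq_bigr => mu _.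
by rewrite size_map -cardE.
Qed.

Lemma all_bigcat (T : Type) (I : Type) (r : seq I) (P : pred I) (F : I -> seq T) (p : pred T) :
  (forall i, P i -> all p (F i)) -> all p (\big[cat/[::]]_(i <- r | P i) F i).
Proof. by move=> h; elim/big_ind: _ => //= l1 l2 h1 h2; rewrite all_cat h1 h2. Qed.

Lemma mem_bigcat (T : eqType) (I : eqType) (r : seq I) (F : I -> seq T) i y :
  i \in r -> y \in F i -> y \in \big[cat/[::]]_(j <- r) F j.
Proof.
elim: r => //= j r IH; rewrite inE big_cons mem_cat => /orP[/eqP->|h] hy.
  by rewrite hy.
by rewrite IH ?orbT.
Qed.

Lemma Wl_pos (R : realType) (S A : finType) (delta : trans R S A) r :
  r \in Wl delta -> 0 < r.
Proof.
have : all (fun r => 0 < r) (Wl delta).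
  apply: all_bigcat => s _; apply: all_bigcat => a _; apply: all_bigcat => mu _.
  by apply/allP => y /mapP [x]; rewrite mem_enum inE => hx ->.
by move/allP; apply.
Qed.

Lemma mu_inV (R : realType) (S A : finType) (delta : trans R S A) :
  fts_wf delta -> forall s a (mu : fuzzy R S), mu \in delta s a ->
  forall u, mu u \in [:: 0, 1 & Wl delta].
Proof.
move=> wf s a mu hmu u.
have /andP[h0 _] := wf s a mu hmu u.
rewrite le_eqVlt in h0; case/orP: h0 => [/eqP<-|hp]; first by rewrite inE eqxx.
rewrite !inE; apply/orP; right; apply/orP; right.
apply: (mem_bigcat (i := s)); first exact: mem_index_enum.
apply: (mem_bigcat (i := a)); first exact: mem_index_enum.
apply: (mem_bigcat (i := mu)); first exact: hmu.
by apply: map_f; rewrite mem_enum inE.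
Qed.

Lemma V_ge0 (R : realType) (S A : finType) (delta : trans R S A) r :
  r \in [:: 0, 1 & Wl delta] -> 0 <= r.
Proof.
rewrite !inE => /orP[/eqP->//|/orP[/eqP->|/Wl_pos/ltW//]]; exact: ler01.
Qed.

Lemma D_inV (R : realType) (S A : finType) (delta : trans R S A) :
  fts_wf delta -> forall n s t, dseq 1 delta n s t \in [:: 0, 1 & Wl delta].
Proof.
move=> wf; elim => [|n IH] s t; first by rewrite inE eqxx.
have -> : dseq 1 delta n.+1 = Delta 1 delta (dseq 1 delta n) by [].
apply: Delta_inV => //; rewrite ?inE ?eqxx ?orbT //.
  exact: V_ge0.
exact: mu_inV.
Qed.

Lemma D_mono (R : realType) (S A : finType) (delta : trans R S A) :
  fts_wf delta -> forall n s t, dseq 1 delta n s t <= dseq 1 delta n.+1 s t.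
Proof.
move=> wf; elim => [|n IH] s t.
  apply: V_ge0; exact: D_inV.
have -> : dseq 1 delta n.+2 = Delta 1 delta (dseq 1 delta n.+1) by [].
have -> : dseq 1 delta n.+1 = Delta 1 delta (dseq 1 delta n) by [].
apply: (@Delta_mono R S A delta [:: 0, 1 & Wl delta]).
- by rewrite inE eqxx.
- exact: V_ge0.
- move=> u v; exact: (D_inV wf n u v).
- move=> u v; exact: (D_inV wf n.+1 u v).
- move=> u v; exact: (IH u v).
- exact: mu_inV.
Qed.

Lemma count_lt (T : eqType) (p q : pred T) s y :
  (forall v, p v -> q v) -> y \in s -> q y -> ~~ p y -> (count p s < count q s)%N.
Proof.
move=> hpq; elim: s => //= a s IH; rewrite inE => /orP[/eqP->|hy] hq hp.
  rewrite (negbTE hp) hq add0n add1n ltnS; exact: sub_count.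
have h1 : (p a <= q a)%N by case pa: (p a) => //; rewrite (hpq a pa).
by rewrite -addnS; exact: leq_add h1 (IH hy hq hp).
Qed.

Theorem proposition3 :
  forall R : realType,
  exists c k : nat,
  forall (S A : finType) (delta : trans R S A),
    fts_wf delta ->
    exists n : nat,
      (n <= c * (fts_size delta).+1 ^ k)%N /\
      dseq 1 delta n = dseq 1 delta n.+1.
Proof.
move=> R; exists 2%N, 3%N => S A delta wf.
pose V := [:: 0, 1 & Wl delta].
pose N := (#|S| * #|S| * size V)%N.
pose Phi n := (\sum_(p : S * S) count (fun v => (v <= dseq 1 delta n p.1 p.2)%R) V)%N.
have hN : (N <= 2 * (fts_size delta).+1 ^ 3)%N.
  rewrite /N /V /fts_size /= -size_Wl; nia.
suff [n hn heq] : exists2 n, (n <= N)%N & dseq 1 delta n = dseq 1 delta n.+1.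
  by exists n; split => //; exact: leq_trans hn hN.
case: (pselect (exists2 n, (n <= N)%N & dseq 1 delta n = dseq 1 delta n.+1)) => // hno.
exfalso.
have step : forall n, (n <= N)%N -> (Phi n < Phi n.+1)%N.
  move=> n hn.
  have hne : dseq 1 delta n <> dseq 1 delta n.+1 by move=> e; apply: hno; exists n.
  have [s [t hst]] : exists s t, dseq 1 delta n s t != dseq 1 delta n.+1 s t.
    case: (pselect (exists s t, dseq 1 delta n s t != dseq 1 delta n.+1 s t)) => // hall.
    exfalso; apply: hne; apply/funext => s; apply/funext => t.
    case: (eqVneq (dseq 1 delta n s t) (dseq 1 delta n.+1 s t)) => // h.
    by exfalso; apply: hall; exists s, t.
  have lt : dseq 1 delta n s t < dseq 1 delta n.+1 s t by rewrite lt_neqAle hst D_mono.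
  rewrite /Phi (bigD1 (s, t)) // [X in (_ < X)%N](bigD1 (s, t)) // -addSn.
  apply: leq_add.
    apply: (count_lt (y := dseq 1 delta n.+1 s t)).
    - by move=> v /= hv; apply: le_trans hv (D_mono wf _ _ _).
    - exact: D_inV.
    - by rewrite /= lexx.
    - by rewrite /= -ltNge.
  apply: leq_sum => p _; apply: sub_count => v /= hv.
  exact: le_trans hv (D_mono wf _ _ _).
have grow : forall n, (n <= N.+1)%N -> (n <= Phi n)%N.
  elim => // n IH hn.
  exact: leq_ltn_trans (IH (ltnW hn)) (step n hn).
have bound : forall n, (Phi n <= N)%N.
  move=> n; have h : (Phi n <= \sum_(p : S * S) size V)%N.
    by apply: leq_sum => p _; exact: count_size.
  apply: leq_trans h _.
  by rewrite sum_nat_const card_prod.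
by have := grow N.+1 (leqnn _); rewrite leqNgt ltnS bound.
Qed.
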